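(* Let $\alpha>0$ be an ordinal, let $X$ be a topological space, let $Y$ be a $U(\alpha)$-space, let $S$ be a dense subset of $X$ and let $f:S\to Y$ be continuous. Then the following are equivalent: (1) $f$ has a continuous extension to $X$ (a continuous $F:X\to Y$ with $F|_S=f$); (2) both of the following hold: $( * )$ for every family $\{A_\beta\}$ of closed subsets of $Y$ with $\bigcap_\beta A_\beta=\emptyset$ one has $\bigcap_\beta\overline{f^{-1}(A_\beta)}=\emptyset$ (closures in $X$); and $( *_\alpha)$ for every open set $V$ of $Y$ the set $X_{\theta^\alpha}(f^{-1}(V))$ is open in $X$.
   Context: $\mathcal N(x)$ denotes the set of all open neighborhoods of $x$ in $X$. For a subset $A$ of a space $Z$ and an ordinal $\alpha>0$, an $\alpha$-hull of $A$ is an open set $U\supseteq A$ for which there exists a family $\{U_\beta\}_{\beta\le\alpha}$ of open sets containing $A$ with $\mathrm{cl}\,U_\beta\subseteq U_{\beta+1}$ whenever $\beta+1\le\alpha$, and $U=U_\alpha=\bigcup_{\beta\le\alpha}U_\beta$. For $M\subseteq Z$, $\mathrm{cl}_{\theta^\alpha}M$ is the set of $z\in Z$ such that every $\alpha$-hull $U$ of $z$ satisfies $\mathrm{cl}\,U\cap M\neq\emptyset$. $Z$ is a $U(\alpha)$-space if any two distinct points have $\alpha$-hulls with disjoint closures. For $V\subseteq Y$, a point $x\in X$ is an $X_{\theta^\alpha}$-interior point of $f^{-1}(V)$ if $\bigcap\{\mathrm{cl}_{\theta^\alpha} f(P\cap S):P\in\mathcal N(x)\}\subseteq V$; $X_{\theta^\alpha}(f^{-1}(V))$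 denotes the set of all such points. *)

(* Defs.v *)
From HB Require Import structures.
From mathcomp Require Import all_boot all_order.
From mathcomp Require Import all_classical topology.
Set Implicit Arguments. Unset Strict Implicit. Unset Printing Implicit Defensive.
Local Open Scope classical_set_scope.

(* An ordinal alpha is represented by the closed initial segment [0, alpha]:
   a well-ordered set (strict, total, well-founded order) with a greatest
   element os_top (= alpha).  Every ordinal alpha gives such a segment and
   every such segment is order-isomorphic to [0, alpha] for a unique alpha. *)
Record ord_seg := OrdSeg {
  os_T : Type;
  os_lt : os_T -> os_T -> Prop;
  os_top : os_T;
  os_irrefl : forall b, ~ os_lt b b;
  os_trans : forall b c d, os_lt b c -> os_lt c d -> os_lt b d;
  os_total : forall b c, os_lt b c \/ b = c \/ os_lt c b;
  os_wf : well_founded os_lt;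
  os_top_max : forall b, b = os_top \/ os_lt b os_top
}.

Definition os_pos (a : ord_seg) : Prop := exists b, os_lt b (os_top a).

Definition os_succ (a : ord_seg) (b c : os_T a) : Prop :=
  os_lt b c /\ forall d, ~ (os_lt b d /\ os_lt d c).

Definition alpha_hull (a : ord_seg) (Z : topologicalType) (A U : set Z) : Prop :=
  exists Uf : os_T a -> set Z,
    (forall b, open (Uf b) /\ A `<=` Uf b) /\
    (forall b c, os_succ b c -> closure (Uf b) `<=` Uf c) /\
    U = Uf (os_top a) /\
    U = \bigcup_(b in [set: os_T a]) Uf b.

Definition cl_theta (a : ord_seg) (Z : topologicalType) (M : set Z) : set Z :=
  [set z | forall U, alpha_hull a [set z] U -> closure U `&` M !=set0].

Definition U_space (a : ord_seg) (Z : topologicalType) : Prop :=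
  forall y z : Z, y <> z -> exists U V,
    alpha_hull a [set y] U /\ alpha_hull a [set z] V /\
    closure U `&` closure V = set0.

(* X_{theta^alpha}(f^{-1}(V)) for f : S -> Y (f given on X, only used on S) *)
Definition X_theta (a : ord_seg) (X Y : topologicalType) (S : set X)
    (f : X -> Y) (V : set Y) : set X :=
  [set x | \bigcap_(P in [set P | open P /\ P x]) cl_theta a (f @` (P `&` S))
           `<=` V].

(* Main.v *)
Require Import Defs.
From mathcomp Require Import all_boot all_order.
From mathcomp Require Import all_classical topology.
Local Open Scope classical_set_scope.

Lemma clP {T : topologicalType} (A : set T) x :
  closure A x <-> (forall O, open O -> O x -> exists y, O y /\ A y).
Proof.
split.
- move=> cl O oO Ox.
  have [y [Ay Oy]] := cl O (open_nbhs_nbhs (conj oO Ox)). by exists y.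
- move=> H B; rewrite nbhsE => -[O [oO Ox] OB].
  have [y [Oy Ay]] := H O oO Ox. by exists y; split; [|apply: OB].
Qed.

Lemma hullP {a : ord_seg} {Z : topologicalType} {A U : set Z} :
  alpha_hull a A U -> open U /\ A `<=` U.
Proof. by move=> [Uf [H1 [_ [-> _]]]]; exact: H1. Qed.

Theorem theorem3p3 (a : ord_seg) (X Y : topologicalType) (S : set X)
    (f : X -> Y) :
  os_pos a -> U_space a Y -> dense S -> {within S, continuous f} ->
  ((exists F : X -> Y, continuous F /\ (forall x, S x -> F x = f x)) <->
   ((forall Fam : set (set Y), (forall A, Fam A -> closed A) ->
       \bigcap_(A in Fam) A = set0 ->
       \bigcap_(A in Fam) closure (S `&` f @^-1` A) = set0) /\
    (forall V : set Y, open V -> open (X_theta a S f V)))).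
Proof.
move=> apos Us dS fc; split.
- move=> [F [Fc FS]].
  have FcP := proj1 (continuousP F) Fc.
  have key : forall x B, closure B x -> closure (F @` B) (F x).
    move=> x B /clP Bx; apply/clP => O oO OFx.
    have [y [Oy By]] := Bx _ (FcP O oO) OFx.
    by exists (F y); split => //; exists y.
  split.
  + move=> Fam Fcl Fam0; apply/seteqP; split=> // x Hx.
    suff : (\bigcap_(A in Fam) A) (F x) by rewrite Fam0.
    move=> A FA.
    rewrite [X in X (F x)](closure_id A).1; last exact: Fcl.
    apply: (closureS _ (key x _ (Hx A FA))).
    by move=> _ [y [Sy Ay] <-]; rewrite FS.
  + move=> V oV.
    suff -> : X_theta a S f V = F @^-1` V by apply: FcP.
    apply/seteqP; split=> x.
    * move=> Hx; apply: Hx => P [oP Px] U hU.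
      have [oU UF] := hullP hU.
      have [s [[Us' Ps] Ss]] : (F @^-1` U `&` P) `&` S !=set0.
        apply: dS; first by exists x; split => //; apply: UF.
        exact: openI (FcP U oU) oP.
      exists (f s); split; last by exists s.
      by apply: subset_closure; rewrite -FS.
    * move=> FxV y Hy; apply: contrapT => nyV.
      have yne : F x <> y by move=> e; apply: nyV; rewrite -e.
      have [U [W [hU [hW disj]]]] := Us _ _ yne.
      have [oU UF] := hullP hU.
      have HP : open (F @^-1` U) /\ (F @^-1` U) x by split; [exact: FcP|exact: UF].
      have := Hy (F @^-1` U) HP W hW.
      move=> [z [clz [s [Ps Ss] fsz]]].
      have : (closure U `&` closure W) z.
        split => //; apply: subset_closure; rewrite -fsz -FS //.
      by rewrite disj.
- move=> [Hstar Halpha].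
  pose I x := \bigcap_(P in [set P | open P /\ P x])
                cl_theta a (f @` (P `&` S)).
  have uniq : forall x y1 y2, I x y1 -> I x y2 -> y1 = y2.
    move=> x y1 y2 H1 H2; apply: contrapT => ne.
    have [U1 [U2 [h1 [h2 disj]]]] := Us _ _ ne.
    pose Fam := fun A : set Y => A = closure U1 \/ A = closure U2.
    have := Hstar Fam.
    have Fcl : forall A, Fam A -> closed A.
      by move=> A [->|->]; exact: closed_closure.
    move=> /(_ Fcl) H.
    have : (\bigcap_(A in Fam) closure (S `&` f @^-1` A)) x.
      have aux : forall U y, alpha_hull a [set y] U -> I x y ->
          closure (S `&` f @^-1` closure U) x.
        move=> U y hU Hy; apply/clP => O oO Ox.
        have [z [clz [s [Os Ss] fsz]]] := Hy O (conj oO Ox) U hU.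
        by exists s; split => //; split => //; move: clz; rewrite -fsz.
      by move=> A [->|->]; [exact: aux h1 H1|exact: aux h2 H2].
    rewrite H //; apply/seteqP; split => // z Hz.
    have := Hz _ (or_introl erefl); have := Hz _ (or_intror erefl).
    move=> z2 z1; have : (closure U1 `&` closure U2) z by [].
    by rewrite disj.
  have ne : forall x, exists y, I x y.
    move=> x; apply: contrapT => nE.
    pose Fam := [set A | exists P, (open P /\ P x) /\ A = closure (f @` (P `&` S))].
    have Fcl : forall A, Fam A -> closed A.
      by move=> A [P [_ ->]]; exact: closed_closure.
    have Fam0 : \bigcap_(A in Fam) A = set0.
      apply/seteqP; split => // y Hy; apply: nE; exists y.
      move=> P HP U hU.
      have [oU Uy] := hullP hU.
      have := Hy _ (ex_intro _ P (conj HP erefl)) => /clP /(_ U oU (Uy _ erefl)).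
      move=> [z [Uz Mz]]; exists z; split => //; exact: subset_closure.
    have := Hstar Fam Fcl Fam0.
    suff : (\bigcap_(A in Fam) closure (S `&` f @^-1` A)) x by move=> H E; rewrite E in H.
    move=> A [P [[oP Px] ->]]; apply/clP => O oO Ox.
    have [s [[Os Ps] Ss]] : (O `&` P) `&` S !=set0.
      by apply: dS; [exists x | exact: openI].
    exists s; split => //; split => //.
    by apply: subset_closure; exists s.
  have [F HF] := choice ne.
  exists F; split.
  + apply/continuousP => V oV.
    suff <- : X_theta a S f V = F @^-1` V by apply: Halpha.
    apply/seteqP; split=> x.
    * by move=> Hx; apply: Hx; apply: HF.
    * by move=> FxV y Iy; rewrite (uniq x y (F x) Iy (HF x)).
  + move=> x Sx; apply: (uniq x); first exact: HF.
    move=> P [oP Px] U hU.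
    have [oU Uf] := hullP hU.
    exists (f x); split; last by exists x.
    by apply: subset_closure; apply: Uf.
Qed.
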